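(* Let $(E,\mathscr T)$ be a stable locally $L^0$-convex module with $\mathrm{supp}(E)>0$. Then $E$ is anti-compact (every subset of $E$ that is compact for $\mathscr T$ in the usual sense is finite) if and only if $\mathrm{supp}(E)$ is atomless (contains no atom of $\mathbb P$).
   Context: $(\Omega,\mathcal F,\mathbb P)$ is a probability space, $L^0$ the real-valued measurable functions modulo a.e. equality (a.e. order), $L^0_+=\{r\ge0\}$, $L^0_{++}=\{r>0\text{ a.e.}\}$; measurable sets are identified modulo null sets. An $L^0$-module $E$ is stable if for every countable measurable partition $(A_k)$ of $\Omega$ and $(x_k)\subset E$ there is a unique $x=\sum_k1_{A_k}x_k\in E$ with $1_{A_k}x=1_{A_k}x_k$ for all $k$. The support of $E$ is $\mathrm{supp}(E)=\bigwedge\{A:1_{A^c}E=\{0\}\}$ (essential infimum of measurable sets). An $L^0$-seminorm is $p:E\to L^0_+$ with $p(rx)=|r|p(x)$, $p(x+y)\le p(x)+p(y)$. A collection $\mathscr P$ of seminorms is stable if nonempty and $\sum_k1_{A_k}p_k\in\mathscr P$ (the seminorm $x\mapsto\sum_k1_{A_k}p_k(x)$) for all $(p_k)\subset\mathscr P$ and countable measurable partitions $(A_k)$; it is separated if $\sup_{p\in\mathscr P}p(x)=0$ implies $x=0$. Let $L^0_s(\mathbb N)$ be the set of step functions $n=\sum_k1_{A_k}n_k$ ($n_k\in\mathbb N$, $(A_k)$ countable measurable partition). A subset $\mathscr N\subset\mathscr P$ is stable finite if $\mathscr N=\{\sum_k 1_{A_k}q_k: q_k\in\mathrm{st}(\mathscr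 N_k)\}$ for some countable measurable partition $(A_k)$ and finite nonempty $\mathscr N_k\subset\mathscr P$, where $\mathrm{st}(\mathscr N_k)$ is the set of all $\sum_j1_{B_j}p_j$ with $p_j\in\mathscr N_k$ and $(B_j)$ a countable measurable partition. A stable locally $L^0$-convex module is a stable $L^0$-module $E$ with the topology $\mathscr T=\mathscr T_s(\mathscr P)$ for a stable separated collection $\mathscr P$ of $L^0$-seminorms, i.e. the topology generated by the base of sets $\{y\in E:\sup_{p\in\mathscr N}p(x-y)<r\}$ with $x\in E$, $r\in L^0_{++}$ and $\mathscr N\subset\mathscr P$ stable finite. *)

(* Defs.v *)
From HB Require Import structures.
From mathcomp Require Import all_boot all_order all_algebra.
From mathcomp Require Import all_classical all_reals all_analysis.
Set Implicit Arguments. Unset Strict Implicit. Unset Printing Implicit Defensive.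
Import Order.TTheory GRing.Theory Num.Theory.
Local Open Scope classical_set_scope.
Local Open Scope ring_scope.

(* L^0 elements are represented by measurable functions
   Omega -> R; all (in)equalities between them are understood P-a.e.
   An L^0-module is a zmodType E with an action [smul] of measurable
   functions which only depends on the a.e.-class of the scalar. *)

Section L0.
Context (d : measure_display) (Omega : measurableType d) (R : realType)
        (P : probability Omega R).

Definition L0_meas (f : Omega -> R) := measurable_fun setT f.

Definition aeq (f g : Omega -> R) := {ae P, forall w, f w = g w}.
Definition ale (f g : Omega -> R) := {ae P, forall w, f w <= g w}.
Definition alt (f g : Omega -> R) := {ae P, forall w, f w < g w}.

(* countable measurable partition of Omega (finite ones: pad with set0) *)
Definition mpartition (A : nat -> set Omega) :=
  (forall k, measurable (A k)) /\ trivIset setT A /\ \bigcup_k A k = setT.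

(* gluing sum_k 1_{A_k} f_k, for a partition A *)
Definition glue (A : nat -> set Omega) (f : nat -> Omega -> R) : Omega -> R :=
  fun w => f (xget 0%N [set k | A k w]) w.

Section Module.
Context (E : zmodType) (smul : (Omega -> R) -> E -> E).

Definition L0module :=
  [/\ (forall r x y, L0_meas r -> smul r (x + y) = smul r x + smul r y),
      (forall r s x, L0_meas r -> L0_meas s -> smul (r \+ s) x = smul r x + smul s x),
      (forall r s x, L0_meas r -> L0_meas s -> smul (r \* s) x = smul r (smul s x)),
      (forall x, smul (cst 1) x = x) &
      (forall r s x, L0_meas r -> L0_meas s -> aeq r s -> smul r x = smul s x)].

Definition stable_module :=
  forall (A : nat -> set Omega) (xs : nat -> E), mpartition A ->
    exists! x : E, forall k, smul (\1_(A k)) x = smul (\1_(A k)) (xs k).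

(* S is (a representative of) supp(E) = ess.inf {A : 1_{A^c} E = {0}} *)
Definition annihilating (A : set Omega) :=
  measurable A /\ forall x : E, smul (\1_(~` A)) x = 0.

Definition is_support (S : set Omega) :=
  [/\ measurable S,
      (forall A, annihilating A -> P (S `\` A) = 0%E) &
      (forall B, measurable B ->
         (forall A, annihilating A -> P (B `\` A) = 0%E) -> P (B `\` S) = 0%E)].

Definition seminorm (p : E -> Omega -> R) :=
  [/\ (forall x, L0_meas (p x)),
      (forall x, ale (cst 0) (p x)),
      (forall r x, L0_meas r -> aeq (p (smul r x)) (fun w => `|r w| * p x w)) &
      (forall x y, ale (p (x + y)) (p x \+ p y))].

Definition sn_mem (PP : set (E -> Omega -> R)) (q : E -> Omega -> R) :=
  exists2 p, PP p & forall x, aeq (p x) (q x).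

Definition glue_sn (A : nat -> set Omega) (p : nat -> E -> Omega -> R) :
  E -> Omega -> R := fun x => glue A (fun k => p k x).

Definition stable_coll (PP : set (E -> Omega -> R)) :=
  PP !=set0 /\
  forall (A : nat -> set Omega) (p : nat -> E -> Omega -> R),
    mpartition A -> (forall k, PP (p k)) -> sn_mem PP (glue_sn A p).

Definition is_esssup (F : set (Omega -> R)) (s : Omega -> R) :=
  [/\ L0_meas s, (forall f, F f -> ale f s) &
      (forall g, L0_meas g -> (forall f, F f -> ale f g) -> ale s g)].

(* sup_{p in PP} p(x) = 0 for nonnegative p's means every p(x) = 0 a.e. *)
Definition separated (PP : set (E -> Omega -> R)) :=
  forall x, (forall p, PP p -> aeq (p x) (cst 0)) -> x = 0.

Definition st_of (N0 : set (E -> Omega -> R)) : set (E -> Omega -> R) :=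
  [set q | exists B p, [/\ mpartition B, (forall j, N0 (p j)) & q = glue_sn B p]].

Definition stable_finite_of (A : nat -> set Omega)
  (Nk : nat -> set (E -> Omega -> R)) : set (E -> Omega -> R) :=
  [set q | exists qk, (forall k, st_of (Nk k) (qk k)) /\ q = glue_sn A qk].

Definition stable_finite_data (PP : set (E -> Omega -> R)) (A : nat -> set Omega)
  (Nk : nat -> set (E -> Omega -> R)) :=
  [/\ mpartition A, (forall k, finite_set (Nk k)),
      (forall k, Nk k !=set0) & (forall k, Nk k `<=` PP)].

Definition sball (N : set (E -> Omega -> R)) (x : E) (r : Omega -> R) : set E :=
  [set y | exists2 s, is_esssup [set q (x - y) | q in N] s & alt s r].

Definition Ts_open (PP : set (E -> Omega -> R)) (U : set E) :=
  forall y, U y -> exists x A Nk r,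
    [/\ stable_finite_data PP A Nk, L0_meas r, alt (cst 0) r,
        sball (stable_finite_of A Nk) x r y &
        sball (stable_finite_of A Nk) x r `<=` U].

Definition Ts_compact (PP : set (E -> Omega -> R)) (K : set E) :=
  forall (I : Type) (U : I -> set E), (forall i, Ts_open PP (U i)) ->
    K `<=` \bigcup_i U i ->
    exists J : set I, finite_set J /\ K `<=` \bigcup_(i in J) U i.

Definition anti_compact (PP : set (E -> Omega -> R)) :=
  forall K : set E, Ts_compact PP K -> finite_set K.

Definition stable_lc_module (PP : set (E -> Omega -> R)) :=
  [/\ L0module, stable_module, (forall p, PP p -> seminorm p),
      stable_coll PP & separated PP].

End Module.

Definition is_atom (B : set Omega) :=
  [/\ measurable B, (0 < P B)%E &
      forall C, measurable C -> C `<=` B -> P C = 0%E \/ P C = P B].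

Definition atomless (S : set Omega) :=
  ~ exists B, B `<=` S /\ is_atom B.

End L0.

(* Main.v *)
Require Import Defs.
From mathcomp Require Import all_boot all_order all_algebra.
From mathcomp Require Import all_classical all_reals all_analysis.
From mathcomp Require Import lra.
Set Implicit Arguments. Unset Strict Implicit. Unset Printing Implicit Defensive.
Import Order.TTheory GRing.Theory Num.Theory.
Local Open Scope classical_set_scope.
Local Open Scope ring_scope.
Section Basic.
Context {d : measure_display} {Omega : measurableType d} {R : realType}
  {P : probability Omega R} {E : zmodType} {smul : (Omega -> R) -> E -> E}.
Hypothesis HL0 : L0module P smul.

Lemma L0_cst (c : R) : L0_meas (cst c : Omega -> R).
Proof. exact: measurable_cst. Qed.

Lemma L0_indic (A : set Omega) : measurable A -> L0_meas (\1_A : Omega -> R).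
Proof. by move=> mA; apply: measurable_realfun.measurable_indic. Qed.

Lemma smul0 x : smul (cst 0) x = 0.
Proof.
case: HL0 => _ sD _ _ _.
have := sD (cst 0) (cst 0) x (L0_cst 0) (L0_cst 0).
have -> : (cst 0 \+ cst 0 : Omega -> R) = cst 0 by apply/funext => w /=; rewrite addr0.
by move=> h; apply: (addrI (smul (cst 0) x)); rewrite addr0 -h.
Qed.

Lemma smulr0 r : L0_meas r -> smul r 0 = 0.
Proof.
case: HL0 => sD _ _ _ _ mr.
have := sD r 0 0 mr; rewrite addr0.
by move=> h; apply: (addrI (smul r 0)); rewrite addr0 -h.
Qed.

Lemma smul_cstD a b x : smul (cst (a + b)) x = smul (cst a) x + smul (cst b) x.
Proof.
case: HL0 => _ sD _ _ _.
exact: (sD (cst a) (cst b) x (L0_cst a) (L0_cst b)).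
Qed.

Lemma smul_cstN c x : smul (cst (- c)) x = - smul (cst c) x.
Proof.
by apply/eqP; rewrite -addr_eq0 -smul_cstD addNr smul0.
Qed.

Lemma smul_cstM a b x : smul (cst a) (smul (cst b) x) = smul (cst (a * b)) x.
Proof.
case: HL0 => _ _ sM _ _.
by rewrite -(sM (cst a) (cst b) x (L0_cst a) (L0_cst b)).
Qed.

Lemma smul_opp x : smul (cst (-1)) x = - x.
Proof. by case: HL0 => _ _ _ s1 _; rewrite smul_cstN s1. Qed.

Lemma indic_split (A : set Omega) :
  (\1_A \+ \1_(~` A) : Omega -> R) = cst 1.
Proof.
apply/funext => w /=; rewrite !indicE.
have [Aw|Aw] := pselect (A w).
  by rewrite mem_set // memNset //= addr0.
by rewrite memNset // mem_set //= add0r.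
Qed.

Lemma smul_split (A : set Omega) x : measurable A ->
  smul (\1_A) x + smul (\1_(~` A)) x = x.
Proof.
case: HL0 => _ sD _ s1 _ mA.
rewrite -(sD _ _ x (L0_indic mA) (L0_indic (measurableC mA))).
by rewrite indic_split s1.
Qed.

Section Seminorm.
Variable p : E -> Omega -> R.
Hypothesis hp : seminorm P smul p.

Lemma sn_meas x : L0_meas (p x). Proof. by case: hp. Qed.
Lemma sn_ge0 x : ale P (cst 0) (p x). Proof. by case: hp. Qed.
Lemma sn_smul r x : L0_meas r -> aeq P (p (smul r x)) (fun w => `|r w| * p x w).
Proof. by case: hp => _ _ h _; apply: h. Qed.
Lemma sn_tri x y : ale P (p (x + y)) (p x \+ p y). Proof. by case: hp. Qed.

Lemma sn0 : aeq P (p 0) (cst 0).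
Proof.
have := @sn_smul (cst 0) 0 (L0_cst 0); rewrite smul0.
by apply: filterS => w /= ->; rewrite normr0 mul0r.
Qed.

Lemma snN x : aeq P (p (- x)) (p x).
Proof.
have := @sn_smul (cst (-1)) x (L0_cst _); rewrite smul_opp.
by apply: filterS => w /= ->; rewrite normrN normr1 mul1r.
Qed.

Lemma sn_tri3 x y z : ale P (p (x - z)) (p (x - y) \+ p (y - z)).
Proof.
have -> : x - z = (x - y) + (y - z) by rewrite addrA subrK.
exact: sn_tri.
Qed.

Lemma sn_indic (A : set Omega) x : measurable A ->
  aeq P (p (smul (\1_A) x)) (fun w => \1_A w * p x w).
Proof.
move=> mA; apply: filterS (sn_smul x (L0_indic mA)) => w ->.
by rewrite ger0_norm // indicE; case: (_ \in _).
Qed.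

End Seminorm.
End Basic.
Section Glue.
Context {d : measure_display} {Omega : measurableType d} {R : realType}
  {P : probability Omega R}.
Local Notation glue := Defs.glue.

Lemma part_meas (A : nat -> set Omega) k : mpartition A -> measurable (A k).
Proof. by case=> h _. Qed.

Lemma part_cover (A : nat -> set Omega) w : mpartition A -> exists k, A k w.
Proof.
case=> _ [_ cov]; have : (\bigcup_k A k) w by rewrite cov.
by case=> k _ Akw; exists k.
Qed.

Lemma part_uniq (A : nat -> set Omega) k j w : mpartition A -> A k w -> A j w -> k = j.
Proof. by case=> _ [tA _] Ak Aj; apply: tA => //; exists w. Qed.

Lemma glueE (A : nat -> set Omega) (f : nat -> Omega -> R) k w : mpartition A -> A k w -> glue A f w = f k w.
Proof.
move=> hA Akw; rewrite /Defs.glue (@xget_unique _ 0%N _ k).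
- by [].
- by [].
- by move=> j /= Ajw; apply: (part_uniq hA Ajw Akw).
Qed.

Lemma glue_meas (A : nat -> set Omega) (f : nat -> Omega -> R) : mpartition A ->
  (forall k, L0_meas (f k)) -> L0_meas (glue A f).
Proof.
move=> hA mf _ Y mY; rewrite setTI.
have -> : glue A f @^-1` Y = \bigcup_k (A k `&` (setT `&` f k @^-1` Y)).
  apply/seteqP; split => w.
    move=> /= Yw; have [k Akw] := part_cover w hA; exists k => //.
    by split => //; split => //; move: Yw; rewrite /= (glueE f hA Akw).
  by case=> k _ [Akw [_ Yw]] /=; rewrite (glueE f hA Akw).
apply: bigcupT_measurable => k; apply: measurableI; first exact: part_meas hA.
exact: (mf k measurableT Y mY).
Qed.

Lemma ae_exists (A : set Omega) (Q : Omega -> Prop) : measurable A ->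
  (0 < P A)%E -> {ae P, forall w, Q w} -> exists w, A w /\ Q w.
Proof.
move=> mA PA [N [mN N0 sub]].
apply: contrapT => nex.
have AN : A `<=` N.
  move=> w Aw; apply: sub => /= Qw; apply: nex; by exists w.
have : (P A <= P N)%E by apply: le_measure; rewrite ?inE.
by rewrite N0 leNgt PA.
Qed.

Lemma esssup_uniq (F : set (Omega -> R)) s1 s2 :
  is_esssup P F s1 -> is_esssup P F s2 -> aeq P s1 s2.
Proof.
case=> m1 u1 l1 [m2 u2 l2].
have h12 := l1 _ m2 u2; have h21 := l2 _ m1 u1.
by apply: filterS2 h12 h21 => w a b; apply/le_anti; rewrite a b.
Qed.

Lemma negligible_ae (A : set Omega) : measurable A -> P A = 0%E ->
  {ae P, forall w, ~ A w}.
Proof.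
move=> mA A0; exists A; split => // w /= /contrapT; done.
Qed.

Lemma ae_and (Q1 Q2 : Omega -> Prop) : {ae P, forall w, Q1 w} ->
  {ae P, forall w, Q2 w} -> {ae P, forall w, Q1 w /\ Q2 w}.
Proof. by move=> h1 h2; apply: filterS2 h1 h2 => w a b. Qed.

End Glue.
Module FinEnum.
Import finmap.
Lemma fin_enum (T : choiceType) (A : set T) : finite_set A -> A !=set0 ->
  exists n (e : nat -> T), [/\ (0 < n)%N, (forall i, (i < n)%N -> A (e i)) &
    (forall x, A x -> exists2 i, (i < n)%N & x = e i)].
Proof.
move=> /finite_fsetP [X ->] [x0 X0].
have memX (y : T) : [set` X] y <-> (y \in finmap.enum_fset X) by [].
exists (size (finmap.enum_fset X)), (fun i => nth x0 (finmap.enum_fset X) i).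
split.
- rewrite lt0n size_eq0; apply/eqP => h; move: X0; rewrite memX h //.
- by move=> i hi /=; apply/memX; rewrite mem_nth.
- move=> x /memX Xx; exists (index x (finmap.enum_fset X)); first by rewrite index_mem.
  by rewrite nth_index.
Qed.
End FinEnum.

Section RMax.
Context (R : realType).
Fixpoint rmax (n : nat) (f : nat -> R) (x0 : R) : R :=
  match n with 0%N => x0 | m.+1 => Num.max (rmax m f x0) (f m) end.

Lemma rmax_ge0 n f x0 : x0 <= rmax n f x0.
Proof. by elim: n => //= n ih; rewrite le_max ih. Qed.

Lemma rmax_ge n f x0 i : (i < n)%N -> f i <= rmax n f x0.
Proof.
elim: n => //= n ih; rewrite ltnS leq_eqVlt => /orP [/eqP ->|hi].
  by rewrite le_max lexx orbT.
by rewrite le_max ih.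
Qed.

Lemma rmax_le n f x0 g : x0 <= g -> (forall i, (i < n)%N -> f i <= g) ->
  rmax n f x0 <= g.
Proof.
move=> h0; elim: n => //= n ih h; rewrite ge_max ih ?h //.
by move=> i hi; apply: h; rewrite ltnS ltnW.
Qed.
End RMax.

Lemma rmax_meas d (Omega : measurableType d) (R : realType) n
    (F : nat -> Omega -> R) (F0 : Omega -> R) :
  measurable_fun setT F0 -> (forall i, measurable_fun setT (F i)) ->
  measurable_fun setT (fun w => rmax n (fun i => F i w) (F0 w)).
Proof.
move=> m0 mF; elim: n => //= n ih.
exact: (measurable_realfun.measurable_maxr ih (mF n)).
Qed.

Section Esssup.
Context {d : measure_display} {Omega : measurableType d} {R : realType}
  {P : probability Omega R} {E : zmodType}.
Local Notation glue := Defs.glue.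
Variables (A : nat -> set Omega) (Nk : nat -> set (E -> Omega -> R))
  (n : nat -> nat) (e : nat -> nat -> E -> Omega -> R).
Hypotheses (hA : mpartition A) (hn : forall k, (0 < n k)%N)
  (he : forall k i, (i < n k)%N -> Nk k (e k i))
  (hsurj : forall k p, Nk k p -> exists2 i, (i < n k)%N & p = e k i)
  (hmeas : forall k i v, L0_meas (e k i v)).

Definition supfn (v : E) : Omega -> R :=
  glue A (fun k w => rmax (n k) (fun i => e k i v w) (e k 0%N v w)).

Lemma supfn_ge v k i w : A k w -> (i < n k)%N -> e k i v w <= supfn v w.
Proof. by move=> Akw hi; rewrite /supfn (glueE _ hA Akw) rmax_ge. Qed.

Lemma supfn_le v k w g : A k w -> (forall i, (i < n k)%N -> e k i v w <= g) ->
  supfn v w <= g.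
Proof.
move=> Akw h; rewrite /supfn (glueE _ hA Akw); apply: rmax_le => //.
exact: h.
Qed.

Lemma supfn_meas v : L0_meas (supfn v).
Proof.
apply: glue_meas => // k; apply: rmax_meas => [|i]; exact: hmeas.
Qed.

Definition B0 : nat -> set Omega := fun j => if j == 0%N then setT else set0.

Lemma B0_part : mpartition B0.
Proof.
split; [|split].
- by move=> j; rewrite /B0; case: ifP.
- move=> i j _ _ [w []]; rewrite /B0.
  by case: eqP => [->|] //; case: eqP => [->|].
- by apply/seteqP; split => // w _; exists 0%N.
Qed.

Lemma glue_B0 (f : Omega -> R) w : glue B0 (fun _ => f) w = f w.
Proof. by []. Qed.

Lemma supfn_esssup v : is_esssup P [set q v | q in stable_finite_of A Nk] (supfn v).
Proof.
split; first exact: supfn_meas.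
- move=> f [q [qk [hqk ->]] <-]; apply: aeW => w.
  have [k Akw] := part_cover w hA.
  rewrite /glue_sn (glueE _ hA Akw).
  have [B [p [hB hp ->]]] := hqk k.
  have [j Bjw] := part_cover w hB.
  rewrite /glue_sn (glueE _ hB Bjw).
  have [i hi ->] := hsurj (hp j).
  exact: supfn_ge.
- move=> g mg hg.
  pose q k i := glue_sn A (fun k' => glue_sn B0 (fun _ => if k' == k then e k i else e k' 0%N)).
  have qN k i : (i < n k)%N -> stable_finite_of A Nk (q k i).
    move=> hi; exists (fun k' => glue_sn B0 (fun _ => if k' == k then e k i else e k' 0%N)).
    split => // k'; exists B0, (fun _ => if k' == k then e k i else e k' 0%N); split => //.
      exact: B0_part.
    by move=> _; case: ifP => [/eqP ->|_]; [apply: he|apply: he].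
  have hall : {ae P, forall w, forall k i, (i < n k)%N -> A k w -> e k i v w <= g w}.
    apply: ae_foralln => k; apply: ae_foralln => i.
    have [hi|hi] := ltnP i (n k); last by apply: aeW.
    have := hg (q k i v) (ex_intro2 _ _ (q k i) (qN k i hi) erefl).
    apply: filterS => w hw _ Akw; move: hw.
    by rewrite /q /glue_sn (glueE _ hA Akw) glue_B0 eqxx.
  apply: filterS hall => w hw.
  have [k Akw] := part_cover w hA.
  by apply: (supfn_le Akw) => i hi; apply: hw.
Qed.

End Esssup.
Section MeasureReal.
Context {d : measure_display} {Omega : measurableType d} {R : realType}
  (P : probability Omega R).

Definition mr (A : set Omega) : R := fine (P A).

Lemma PE A : measurable A -> P A = (mr A)%:E.
Proof. by move=> mA; rewrite /mr fineK // fin_num_measure. Qed.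

Lemma mr_ge0 A : 0 <= mr A.
Proof. by rewrite /mr fine_ge0 // measure_ge0. Qed.

Lemma mr_le A B : measurable A -> measurable B -> A `<=` B -> mr A <= mr B.
Proof.
move=> mA mB AB; rewrite -lee_fin -!PE //.
by apply: le_measure; rewrite ?inE.
Qed.

Lemma mr_pos A : measurable A -> (0 < P A)%E <-> 0 < mr A.
Proof. by move=> mA; rewrite PE // lte_fin. Qed.

Lemma mrD C D : measurable C -> measurable D -> D `<=` C ->
  mr (C `\` D) = mr C - mr D.
Proof.
move=> mC mD DC.
have : P (C `\` D) = (P C - P (C `&` D))%E.
  by rewrite measureD // ltey_eq fin_num_measure.
rewrite setIidr // !PE //; last exact: measurableD.
by rewrite -EFinB => -[].
Qed.

Lemma mr_le1 A : measurable A -> mr A <= 1.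
Proof. by move=> mA; rewrite -lee_fin -PE // probability_le1. Qed.

End MeasureReal.

Section Atomless.
Context (d : measure_display) (Omega : measurableType d) (R : realType)
  (P : probability Omega R) (S : set Omega).
Hypothesis HS : atomless P S.
Local Notation mr := (mr P).

Lemma halve C : measurable C -> C `<=` S -> 0 < mr C ->
  exists D, [/\ measurable D, D `<=` C, 0 < mr D & mr D <= mr C / 2].
Proof.
move=> mC CS Cpos.
have : ~ is_atom P C by move=> hat; apply: HS; exists C.
case/not_and3P => [/(_ mC)[]|h|]; first by exfalso; apply: h; rewrite mr_pos.
move=> /existsNP[D] /not_implyP[mD] /not_implyP[DC] /not_orP[D0 DC'].
have Dpos : 0 < mr D.
  rewrite lt_neqAle mr_ge0 andbT; apply/eqP => h; apply: D0.
  by rewrite PE // -h.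
have DltC : mr D < mr C.
  rewrite lt_neqAle mr_le // andbT; apply/eqP => h; apply: DC'.
  by rewrite !PE // h.
have [h|h] := leP (mr D) (mr C / 2).
  by exists D; split.
exists (C `\` D); split => //.
- exact: measurableD.
- by rewrite mrD // subr_gt0.
- by rewrite mrD //; lra.
Qed.

Lemma small_subset G (eps : R) : measurable G -> G `<=` S -> 0 < mr G -> 0 < eps ->
  exists C, [/\ measurable C, C `<=` G, 0 < mr C & mr C < eps].
Proof.
move=> mG GS Gpos epos.
have hm m : exists C, [/\ measurable C, C `<=` G, 0 < mr C & mr C <= mr G / 2 ^+ m].
  elim: m => [|m [C [mC CG Cpos Cle]]].
    by exists G; split => //; rewrite expr0 divr1.
  have [D [mD DC Dpos Dle]] := halve mC (subset_trans CG GS) Cpos.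
  exists D; split => //; first exact: subset_trans DC CG.
  apply: (le_trans Dle); rewrite exprS invfM.
  move: Cle; set t := (2 ^+ m)^-1; lra.
pose m := Num.Def.archi_bound (eps^-1).
have ei : 0 <= eps^-1 by rewrite invr_ge0 ltW.
have hb := @archi_boundP _ (eps^-1) ei.
have [C [mC CG Cpos Cle]] := hm m.
exists C; split => //.
apply: (le_lt_trans Cle).
have h2m : (m%:R <= (2 : R) ^+ m).
  elim: (m) => [|k ih]; first by rewrite expr0.
  have h1 : 1 <= (2:R) ^+ k by rewrite exprn_ege1 // ler1n.
  rewrite exprS -natr1; lra.
have Gle := mr_le1 P mG.
rewrite ltr_pdivrMr ?exprn_gt0 //.
apply: (le_lt_trans Gle).
rewrite -[X in X < _](mulfV (lt0r_neq0 epos)) ltr_pM2l //.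
exact: lt_le_trans hb h2m.
Qed.

End Atomless.
Section Disjoint.
Context (d : measure_display) (Omega : measurableType d) (R : realType)
  (P : probability Omega R) (S : set Omega).
Hypothesis HS : atomless P S.
Local Notation mr := (mr P).

Fixpoint chainf (sm : nat -> R -> set Omega) (n : nat) : set Omega :=
  match n with
  | 0%N => sm 0%N 1
  | k.+1 => sm k.+1 (mr (chainf sm k) / 2 ^+ k.+3)
  end.

Lemma disjoint_family (G : nat -> set Omega) :
  (forall n, measurable (G n)) -> (forall n, G n `<=` S) -> (forall n, 0 < mr (G n)) ->
  exists A : nat -> set Omega, [/\ (forall n, measurable (A n)),
    (forall n, A n `<=` G n), (forall n, 0 < mr (A n)) &
    (forall i j w, A i w -> A j w -> i = j)].
Proof.
move=> mG GS Gpos.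
have hsm n : exists f : R -> set Omega, forall eps, 0 < eps ->
    [/\ measurable (f eps), f eps `<=` G n, 0 < mr (f eps) & mr (f eps) < eps].
  have ex : forall eps : R, exists C, 0 < eps ->
      [/\ measurable C, C `<=` G n, 0 < mr C & mr C < eps].
    move=> eps; have [epos|eneg] := ltP 0 eps.
      have [C hC] := small_subset HS (mG n) (GS n) (Gpos n) epos.
      by exists C.
    by exists set0.
  have [f hf] := choice ex.
  by exists f.
have [sm hsm'] := choice hsm.
pose c := chainf sm.
have hc n : [/\ measurable (c n), c n `<=` G n & 0 < mr (c n)].
  elim: n => [|n [mc cG cpos]].
    by have [] := hsm' 0%N 1 ltr01; split.
  have e0 : 0 < mr (c n) / 2 ^+ n.+3 by rewrite divr_gt0 // exprn_gt0.
  by have [] := hsm' n.+1 _ e0; split.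
have hc1 n : mr (c n.+1) * 2 ^+ n.+3 < mr (c n).
  have [_ _ cpos] := hc n.
  have e0 : 0 < mr (c n) / 2 ^+ n.+3 by rewrite divr_gt0 // exprn_gt0.
  have [_ _ _ h] := hsm' n.+1 _ e0.
  by rewrite -ltr_pdivlMr ?exprn_gt0.
have hbound k j : (k < j)%N -> mr (c j) * 2 ^+ j.+2 <= mr (c k).
  elim: j => // j ih; rewrite ltnS leq_eqVlt => /orP[/eqP <-|hkj].
    exact: ltW (hc1 k).
  apply: le_trans (ih hkj); apply: ltW; apply: lt_le_trans (hc1 j) _.
  by apply: ler_peMr; [exact: mr_ge0|rewrite exprn_ege1 // ler1n].
have hbound' k j : (k < j)%N -> mr (c j) <= (mr (c k) / 2) / (2 ^ j.+1)%:R.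
  move=> kj; have := hbound k j kj.
  rewrite -ler_pdivlMr ?exprn_gt0 // natrX -mulrA -invfM -exprS.
  done.
pose T k := \bigcup_j (if (k < j)%N then c j else set0).
have mT k : measurable (T k).
  by apply: bigcupT_measurable => j; case: ifP => _; [case: (hc j)|].
have PT k : mr (T k) <= mr (c k) / 2.
  rewrite -lee_fin -(PE P (mT k)).
  have mF j : measurable (if (k < j)%N then c j else set0).
    by case: ifP => _; [case: (hc j)|].
  apply: le_trans; first exact: (@measure_sigma_subadditive _ _ _ P (T k)
    (fun j => if (k < j)%N then c j else set0) mF (mT k) (subset_refl _)).
  apply: le_trans; last apply: (epsilon_trick0 xpredT).
    apply: lee_nneseries => i _; first by move=> _; apply: measure_ge0.
    case: ifP => hki; last by rewrite /= measure0 lee_fin divr_ge0 ?divr_ge0 ?mr_ge0.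
    by have [mc _ _] := hc i; rewrite /= (PE P mc) lee_fin hbound'.
  by rewrite divr_ge0 ?mr_ge0.
exists (fun k => c k `\` T k); split.
- by move=> k; apply: measurableD => //; case: (hc k).
- by move=> k w [ckw _]; case: (hc k) => _ /(_ w ckw).
- move=> k; have [mc _ cpos] := hc k.
  have : P (c k `\` T k) = (P (c k) - P (c k `&` T k))%E.
    by rewrite measureD // ltey_eq fin_num_measure.
  rewrite (PE P mc) (PE P (measurableI _ _ mc (mT k))) (PE P (measurableD mc (mT k))).
  rewrite -EFinB => -[->].
  have := @mr_le _ _ _ P _ _ (measurableI _ _ mc (mT k)) (mT k) (@subIsetr _ _ _).
  have := PT k; lra.
- move=> i j w [ciw Tiw] [cjw Tjw]; have [h|h|//] := ltngtP i j.
  + by exfalso; apply: Tiw; exists j => //; rewrite h.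
  + by exfalso; apply: Tjw; exists i => //; rewrite h.
Qed.

End Disjoint.
Lemma meas_lt d (Omega : measurableType d) (R : realType) (f g : Omega -> R) :
  measurable_fun setT f -> measurable_fun setT g -> measurable [set w | f w < g w].
Proof.
move=> mf mg.
have := measurable_realfun.measurable_fun_ltr mf mg measurableT (Y := [set true]) I.
rewrite setTI; congr measurable; apply/seteqP; split => w //=.
Qed.

Section AtomLemma.
Context (d : measure_display) (Omega : measurableType d) (R : realType)
  (P : probability Omega R).

Lemma atom_lb (B : set Omega) (f : Omega -> R) : is_atom P B -> L0_meas f ->
  {ae P, forall w, B w -> 0 < f w} ->
  exists eps : R, 0 < eps /\ {ae P, forall w, B w -> eps <= f w}.
Proof.
move=> [mB Bpos hB] mf hpos.
apply: contrapT => hno.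
pose C m := B `&` [set w | f w < (m.+1%:R)^-1].
have mC m : measurable (C m).
  by apply: measurableI => //; apply: meas_lt => //; exact: measurable_cst.
have hCB m : P (C m) = P B.
  have [h|//] := hB (C m) (mC m) (@subIsetl _ _ _).
  exfalso; apply: hno; exists (m.+1%:R)^-1; split; first by rewrite invr_gt0.
  exists (C m); split => // w /= h1; split.
    by apply: contrapT => Bw; apply: h1 => /Bw.
  by rewrite /= ltNge; apply/negP => h3; apply: h1 => _.
have hD m : P (B `\` C m) = 0%E.
  rewrite (PE P (measurableD mB (mC m))) mrD //; last exact: subIsetl.
  by rewrite /mr hCB subrr.
have negB : P.-negligible B.
  have sub : B `<=` (~` [set w | B w -> 0 < f w]) `|` \bigcup_m (B `\` C m).
    move=> w Bw; have [fpos|fneg] := ltP 0 (f w); last first.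
      by left => /(_ Bw); rewrite ltNge fneg.
    have fi : 0 <= (f w)^-1 by rewrite invr_ge0 ltW.
    right; have := archi_boundP fi.
    set m := Num.Def.archi_bound _ => hm.
    exists m => //; split => // -[_ /=].
    rewrite ltNge => /negP; apply.
    rewrite -(invrK (f w)) lef_pV2 ?posrE ?invr_gt0 //.
      by apply: ltW; apply: (lt_le_trans hm); rewrite ler_nat.
  apply: (negligibleS sub); apply: negligibleU; first exact: hpos.
  apply: negligible_bigcup => m.
  by apply/negligibleP; [exact: measurableD|exact: hD].
have := measure_negligible mB negB.
by move=> h; move: Bpos; rewrite h ltxx.
Qed.

Lemma atom_ub (B : set Omega) (f : Omega -> R) : is_atom P B -> L0_meas f ->
  exists M : R, {ae P, forall w, B w -> f w <= M}.
Proof.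
move=> [mB Bpos hB] mf.
apply: contrapT => hno.
pose C m := B `&` [set w | m%:R < f w].
have mC m : measurable (C m).
  by apply: measurableI => //; apply: meas_lt => //; exact: measurable_cst.
have hCB m : P (C m) = P B.
  have [h|//] := hB (C m) (mC m) (@subIsetl _ _ _).
  exfalso; apply: hno; exists m%:R.
  exists (C m); split => // w /= h1; split.
    by apply: contrapT => Bw; apply: h1 => /Bw.
  by rewrite /= ltNge; apply/negP => h3; apply: h1 => _.
have hD m : P (B `\` C m) = 0%E.
  rewrite (PE P (measurableD mB (mC m))) mrD //; last exact: subIsetl.
  by rewrite /mr hCB subrr.
have negB : P.-negligible B.
  have sub : B `<=` \bigcup_m (B `\` C m).
    move=> w Bw; have := archi_boundP (normr_ge0 (f w)).
    set m := Num.Def.archi_bound _ => hm.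
    exists m => //; split => // -[_ /=].
    rewrite ltNge => /negP; apply.
    by apply: ltW; apply: le_lt_trans hm; rewrite ler_norm.
  apply: (negligibleS sub).
  apply: negligible_bigcup => m.
  by apply/negligibleP; [exact: measurableD|exact: hD].
have := measure_negligible mB negB.
by move=> h; move: Bpos; rewrite h ltxx.
Qed.

End AtomLemma.
Lemma inj_of_infinite (T : Type) (K : set T) : infinite_set K ->
  exists f : nat -> T, injective f /\ forall n, K (f n).
Proof.
move/infiniteP/card_leP => [f].
pose g n := \val (f (exist _ n (mem_set (I : setT n)))).
exists g; split.
  move=> m n; rewrite /g => /val_inj/(@inj _ _ _ f).
  move=> h. have := h (mem_set I) (mem_set I). case. done.
move=> n; rewrite /g; have := set_valP (f (exist _ n (mem_set (I : setT n)))). done.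
Qed.

Lemma meas_half d (Omega : measurableType d) (R : realType) (h : Omega -> R) :
  measurable_fun setT h -> measurable_fun setT (fun w => if 0 < h w then h w / 2 else 1).
Proof.
move=> mh; apply: measurable_fun_if => //.
- exact: (measurable_realfun.measurable_fun_ltr (measurable_cst _) mh).
- apply: measurable_funS (_ : measurable_fun setT (fun w => h w / 2)) => //.
  exact: measurable_realfun.measurable_funM mh (measurable_cst _).
Qed.

Section Main.
Context (d : measure_display) (Omega : measurableType d) (R : realType)
  (P : probability Omega R) (E : zmodType) (smul : (Omega -> R) -> E -> E)
  (PP : set (E -> Omega -> R)) (S : set Omega).
Hypotheses (HLC : stable_lc_module P smul PP) (HS : is_support P smul S)
  (HSpos : (0 < P S)%E).
Local Notation glue := Defs.glue.

Lemma HL0 : L0module P smul. Proof. by case: HLC. Qed.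
Lemma Hsn p : PP p -> seminorm P smul p. Proof. by case: HLC => _ _ h _ _; apply: h. Qed.
Lemma Hsep : Defs.separated P PP. Proof. by case: HLC. Qed.
Lemma HPP0 : PP !=set0. Proof. by case: HLC => _ _ _ [] . Qed.

Lemma ae_null (B : set Omega) (Q : Omega -> Prop) : measurable B ->
  {ae P, forall w, Q w} -> (forall w, B w -> ~ Q w) -> P B = 0%E.
Proof.
move=> mB hQ hB; apply/(negligibleP _ mB).
by apply: (negligibleS _ hQ) => w /hB.
Qed.

Lemma F_supp p v : PP p -> P ([set w | 0 < p v w] `\` S) = 0%E.
Proof.
move=> Pp; have hp := Hsn Pp.
have mF : measurable [set w | 0 < p v w].
  by apply: meas_lt; [exact: measurable_cst|exact: (sn_meas hp)].
case: HS => mS _ h3; apply: h3 => // A [mA hA].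
have ev : smul (\1_A) v = v by rewrite -{2}(smul_split HL0 v mA) hA addr0.
have := sn_indic hp v mA; rewrite ev => hae.
apply: (ae_null (measurableD mF mA) hae) => w [/= pos nA].
rewrite indicE memNset // mul0r => h; by move: pos; rewrite h ltxx.
Qed.

Lemma pos_of_nonzero p v : PP p -> ~ aeq P (p v) (cst 0) ->
  (0 < P [set w | (0 < p v w)%R])%E.
Proof.
move=> Pp hnz; have hp := Hsn Pp.
have mF : measurable [set w | 0 < p v w].
  by apply: meas_lt; [exact: measurable_cst|exact: (sn_meas hp)].
rewrite lt0e measure_ge0 andbT; apply/negP => /eqP F0; apply: hnz.
have := negligible_ae mF F0; have := sn_ge0 hp v.
apply: filterS2 => w /= h1 h2; apply/le_anti; rewrite h1 andbT.
by rewrite leNgt; apply/negP.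
Qed.


Lemma nbhd_avoid (HA : atomless P S) (x_ : nat -> E) (x : E) :
  exists U, [/\ Ts_open P PP U, U x & forall n, U (x_ n) -> x_ n = x].
Proof.
have mS : measurable S by case: HS.
have hpick n : exists pF : (E -> Omega -> R) * set Omega,
    [/\ PP pF.1, measurable pF.2, (0 < P pF.2)%E, P (pF.2 `\` S) = 0%E &
        (x_ n <> x -> forall w, pF.2 w -> 0 < pF.1 (x - x_ n) w)].
  have [eq|neq] := pselect (x_ n = x).
    have [p0 Pp0] := HPP0; exists (p0, S); split => //=.
    by rewrite setDv measure0.
  have : ~ (forall p, PP p -> aeq P (p (x - x_ n)) (cst 0)).
    move=> h; apply: neq; apply/eqP; rewrite eq_sym -subr_eq0; apply/eqP.
    exact: Hsep h.
  move=> /existsNP [p] /not_implyP [Pp hnz].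
  exists (p, [set w | 0 < p (x - x_ n) w]); split => //=.
  - by apply: meas_lt; [exact: measurable_cst|exact: (sn_meas (Hsn Pp))].
  - exact: pos_of_nonzero.
  - exact: F_supp.
have [pf hpf] := choice hpick.
pose p_ n := (pf n).1; pose F_ n := (pf n).2.
have mF n : measurable (F_ n) by case: (hpf n) => _ ? _ _ _.
pose G n := F_ n `&` S.
have mG n : measurable (G n) by apply: measurableI.
have GS n : G n `<=` S by move=> w [].
have Gpos n : 0 < mr P (G n).
  have [_ _ Fpos FS _] := hpf n.
  have fin : (P (F_ n) < +oo)%E by rewrite (PE P (mF n)) ltry.
  have h : P (F_ n `\` S) = (P (F_ n) - P (F_ n `&` S))%E :=
    @measureD _ _ _ P (F_ n) S (mF n) mS fin.
  have FS' : P (F_ n `\` S) = 0%E := FS.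
  move: h; rewrite FS' (PE P (mF n)) (PE P (mG n)) -EFinB => -[] /esym /eqP.
  rewrite subr_eq0 => /eqP <-; by rewrite -mr_pos.
have [Ad [mAd AdG Adpos Addisj]] := disjoint_family HA mG GS Gpos.
pose A' k := if k is k'.+1 then Ad k' else ~` \bigcup_j Ad j.
have hA' : mpartition A'.
  split; [|split].
  - case => [|k] /=; last exact: mAd.
    by apply: measurableC; apply: bigcupT_measurable.
  - move=> [|i] [|j] _ _ [w [/= hi hj]] //.
    + by exfalso; apply: hi; exists j.
    + by exfalso; apply: hj; exists i.
    + by rewrite (Addisj _ _ _ hi hj).
  - apply/seteqP; split => // w _.
    have [[j _ Ajw]|nA] := pselect ((\bigcup_j Ad j) w).
      by exists j.+1.
    by exists 0%N.
pose pk k := if k is k'.+1 then p_ k' else p_ 0%N.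
have Ppn k : PP (p_ k) by case: (hpf k) => ? _ _ _ _.
have Ppk k : PP (pk k) by case: k => [|k] /=; apply: Ppn.
pose Nk k := [set pk k].
pose nn := fun _ : nat => 1%N.
pose e := fun (k i : nat) => pk k.
have hn k : (0 < nn k)%N by [].
have he k i : (i < nn k)%N -> Nk k (e k i) by [].
have hsurj k p : Nk k p -> exists2 i, (i < nn k)%N & p = e k i.
  by move=> ->; exists 0%N.
have hmeas k i v : L0_meas (e k i v) by exact: (sn_meas (Hsn (Ppk k))).
have hesup v := supfn_esssup (P:=P) hA' hn he hsurj hmeas v.
have sup_eq v k w : A' k w -> supfn A' nn e v w = pk k v w.
  move=> Akw; apply/le_anti/andP; split.
    by apply: (@supfn_le _ _ _ _ A' nn e hA' hn v k w _ Akw) => i _.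
  exact: (@supfn_ge _ _ _ _ A' nn e hA' v k 0 w Akw isT).
have hv0 : {ae P, forall w, supfn A' nn e 0 w = 0}.
  have : {ae P, forall w, forall k, pk k 0 w = 0}.
    by apply: ae_foralln => k; apply: (sn0 HL0 (Hsn (Ppk k))).
  apply: filterS => w h; have [k Akw] := part_cover w hA'.
  by rewrite (sup_eq _ _ _ Akw).
pose rk k w := if k is k'.+1 then
  (if 0 < p_ k' (x - x_ k') w then p_ k' (x - x_ k') w / 2 else 1) else 1.
pose r := glue A' rk.
have mr_ : L0_meas r.
  apply: glue_meas => // -[|k] /=; first exact: measurable_cst.
  by apply: meas_half; exact: (sn_meas (Hsn (Ppk k.+1))).
have rpos w : 0 < r w.
  have [k Akw] := part_cover w hA'; rewrite /r (glueE _ hA' Akw).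
  case: k Akw => [|k] //= _; case: ifP => // h.
  by rewrite divr_gt0.
pose N := stable_finite_of A' Nk.
have sfd : stable_finite_data PP A' Nk.
  split => //.
  - by move=> k; exact: finite_set1.
  - by move=> k; exists (pk k).
  - by move=> k q ->.
exists (sball P N x r); split.
- move=> y [s hs slt].
  have ms : L0_meas s by case: hs.
  exists y, A', Nk, (r \- s); split => //.
  + exact: measurable_realfun.measurable_funB.
  + by apply: filterS slt => w /=; rewrite subr_gt0.
  + exists (supfn A' nn e (y - y)); first exact: hesup.
    rewrite subrr; apply: filterS2 hv0 slt => w /= -> ; by rewrite subr_gt0.
  + move=> z [s' hs' s'lt]; exists (supfn A' nn e (x - z)); first exact: hesup.
    have htri : {ae P, forall w, forall k, pk k (x - z) w <= pk k (x - y) w + pk k (y - z) w}.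
      by apply: ae_foralln => k; apply: (sn_tri3 (Hsn (Ppk k))).
    have e1 := esssup_uniq hs (hesup (x - y)).
    have e2 := esssup_uniq hs' (hesup (y - z)).
    apply: filterS (ae_and htri (ae_and e1 (ae_and e2 (ae_and slt s'lt)))).
    move=> w [ht [es [es' [l1 l2]]]]; have [k Akw] := part_cover w hA'.
    rewrite (sup_eq _ _ _ Akw).
    move: (ht k) es es' l1 l2; rewrite !(sup_eq _ _ _ Akw) /= => h1 h2 h3 l1 l2.
    lra.
- exists (supfn A' nn e (x - x)); first exact: hesup.
  by rewrite subrr; apply: filterS hv0 => w ->.
- move=> n [s hs slt]; apply: contrapT => neq.
  have [_ _ _ _ hF] := hpf n.
  have e1 := esssup_uniq hs (hesup (x - x_ n)).
  have [w [Anw [l1 l2]]] := ae_exists (A := A' n.+1) (mAd n) ((mr_pos P (mAd n)).2 (Adpos n))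
    (ae_and slt e1).
  have Fw : F_ n w by have [] := AdG n w Anw.
  have hpos := hF neq w Fw.
  move: l1; rewrite l2 (sup_eq _ _ _ Anw) /r (glueE _ hA' Anw) /= -/(p_ n) hpos.
  move: hpos; rewrite /pk -/(p_ n); lra.
Qed.

Lemma atomless_anti : atomless P S -> anti_compact P PP.
Proof.
move=> HA K Kc; apply: contrapT => Kinf.
have [x_ [xinj xK]] := inj_of_infinite Kinf.
have [Uf hUf] := choice (nbhd_avoid HA x_).
have hop i : Ts_open P PP (Uf i) by case: (hUf i).
have hin i : Uf i i by case: (hUf i).
have hav i n : Uf i (x_ n) -> x_ n = i by case: (hUf i) => _ _; apply.
have [J [finJ cov]] := Kc E Uf hop (fun y Ky => ex_intro2 _ _ y I (hin y)).
have JK n : J (x_ n).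
  have [j Jj Ujx] := cov _ (xK n).
  by rewrite (hav j n Ujx).
have := finite_preimage (f := x_) (B := J) (fun a b _ _ => xinj a b) finJ.
have -> : x_ @^-1` J = setT by apply/seteqP; split => // n _; exact: JK n.
exact: infinite_nat.
Qed.


Lemma atom_not_anti (B : set Omega) : B `<=` S -> is_atom P B -> ~ anti_compact P PP.
Proof.
move=> BS hB hac.
have [mB Bpos _] := hB.
have [x0 hz] : exists x0, smul (\1_B) x0 <> 0.
  apply: contrapT => /forallNP h.
  have ann : annihilating smul (~` B).
    split; first exact: measurableC.
    by move=> x; rewrite setCK; apply: contrapT; exact: h.
  case: HS => _ h2 _; have := h2 _ ann.
  rewrite setDE setCK setIidr // => B0; by move: Bpos; rewrite B0 ltxx.
pose z := smul (\1_B) x0.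
pose c (n : nat) : R := (n.+1%:R)^-1.
have cpos n : 0 < c n by rewrite invr_gt0.
pose y n := smul (cst (c n)) z.
have yinj : injective y.
  move=> m n hmn; apply: contrapT => neq.
  have cne : c m - c n != 0.
    rewrite subr_eq0; apply/eqP => /(congr1 GRing.inv); rewrite !invrK.
    by move/eqP; rewrite eqr_nat eqSS => /eqP.
  have h0 : smul (cst (c m - c n)) z = 0.
    by rewrite (smul_cstD HL0) (smul_cstN HL0) -/(y m) -/(y n) hmn subrr.
  apply: hz; rewrite -/z.
  have := smul_cstM HL0 ((c m - c n)^-1) (c m - c n) z.
  rewrite h0 (smulr0 HL0 (L0_cst _)) mulVf //.
  by case: HL0 => _ _ _ s1 _; rewrite s1.
pose K := [set v | v = 0 \/ exists n, v = y n].
apply: (_ : ~ finite_set K).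
  move=> finK; have := finite_preimage (f := y) (B := K) (fun a b _ _ => yinj a b) finK.
  have -> : y @^-1` K = setT by apply/seteqP; split => // n _; right; exists n.
  exact: infinite_nat.
apply: hac => I U hU cov.
have [i0 _ Ui0] := cov 0 (or_introl erefl).
have [c0 [A [Nk [r [sfd mr_ rpos [s0 hs0 s0lt] sub]]]]] := hU i0 0 Ui0.
case: sfd => hA finN neN subPP.
have hen k : exists ne : nat * (nat -> E -> Omega -> R),
    [/\ (0 < ne.1)%N, (forall i, Nk k (ne.2 i)) &
        (forall p, Nk k p -> exists2 i, (i < ne.1)%N & p = ne.2 i)].
  have [m [f [m0 hf hs]]] := FinEnum.fin_enum (finN k) (neN k).
  exists (m, fun i => if (i < m)%N then f i else f 0%N); split => //=.
  - by move=> i; case: ifP => h; apply: hf.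
  - by move=> p /hs [i im ->]; exists i => //; rewrite im.
have [nef hnef] := choice hen.
pose n k := (nef k).1; pose e k := (nef k).2.
have hn k : (0 < n k)%N by case: (hnef k).
have he' k i : Nk k (e k i) by case: (hnef k) => _ + _; apply.
have he k i : (i < n k)%N -> Nk k (e k i) by move=> _; apply: he'.
have hsurj k p : Nk k p -> exists2 i, (i < n k)%N & p = e k i by case: (hnef k) => _ _; apply.
have hsn k i : seminorm P smul (e k i) by apply: Hsn; apply: subPP (he' k i).
have hmeas k i v : L0_meas (e k i v) by exact: (sn_meas (hsn k i)).
have hesup v := supfn_esssup (P:=P) hA hn he hsurj hmeas v.
pose sup := supfn A n e.
have es0 : aeq P s0 (sup c0).
  by have := esssup_uniq hs0 (hesup (c0 - 0)); rewrite subr0.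
have msup v : L0_meas (sup v) by case: (hesup v).
have hb : {ae P, forall w, forall k i m,
    e k i (c0 - y m) w <= e k i c0 w + c m * (\1_B w * e k i x0 w)}.
  apply: ae_foralln => k; apply: ae_foralln => i; apply: ae_foralln => m.
  have h1 := sn_tri (hsn k i) c0 (- y m).
  have h2 := snN HL0 (hsn k i) (y m).
  have h3 := sn_smul (hsn k i) z (L0_cst (c m)).
  have h4 := sn_indic (hsn k i) x0 mB.
  apply: filterS (ae_and h1 (ae_and h2 (ae_and h3 h4))) => w [a1 [a2 [a3 a4]]].
  by move: a1; rewrite /= a2 a3 -/z a4 (ger0_norm (ltW (cpos m))).
have hsupb : {ae P, forall w, forall m,
    sup (c0 - y m) w <= sup c0 w + c m * (\1_B w * sup x0 w)}.
  apply: filterS hb => w hw m.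
  have [k Akw] := part_cover w hA.
  apply: (@supfn_le _ _ _ _ A n e hA hn _ k w _ Akw) => i hi.
  apply: (le_trans (hw k i m)); apply: lerD.
    exact: (@supfn_ge _ _ _ _ A n e hA c0 k i w Akw hi).
  apply: ler_wpM2l; first exact: ltW.
  apply: ler_wpM2l; first by rewrite indicE; case: (_ \in _).
  exact: (@supfn_ge _ _ _ _ A n e hA x0 k i w Akw hi).
have [eps [epos heps]] : exists eps : R, 0 < eps /\
    {ae P, forall w, B w -> eps <= r w - sup c0 w}.
  apply: (atom_lb (f := r \- sup c0) hB).
    exact: measurable_realfun.measurable_funB mr_ (msup c0).
  by apply: filterS (ae_and s0lt es0) => w [l1 l2] _; rewrite /= subr_gt0 -l2.
have [M hM] := atom_ub hB (msup x0).
pose M' := Num.max M 0.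
have M'0 : 0 <= M' by rewrite le_max lexx orbT.
pose m0 := Num.Def.archi_bound (M' / eps).
have hm0 := archi_boundP (divr_ge0 M'0 (ltW epos)).
have small m : (m0 <= m)%N -> c m * M' < eps.
  move=> hm.
  have h1 : M' / eps < m.+1%:R.
    by apply: (lt_le_trans hm0); rewrite ler_nat; exact: leqW.
  move: h1; rewrite ltr_pdivrMr // => h1.
  by rewrite /c mulrC ltr_pdivrMr // mulrC.
have iny m : (m0 <= m)%N -> sball P (stable_finite_of A Nk) c0 r (y m).
  move=> hm; exists (sup (c0 - y m)); first exact: hesup.
  apply: filterS (ae_and hsupb (ae_and heps (ae_and hM (ae_and s0lt es0)))).
  move=> w [h1 [h2 [h3 [h4 h5]]]].
  apply: (le_lt_trans (h1 m)).
  have [Bw|nBw] := pselect (B w).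
    rewrite indicE mem_set // mul1r.
    have hle : c m * sup x0 w <= c m * M'.
      by apply: ler_wpM2l; [exact: ltW|apply: le_trans (h3 Bw) _; rewrite le_max lexx].
    have := small m hm; have := h2 Bw; lra.
  by rewrite indicE memNset // mul0r mulr0 addr0 -h5.
have hiy m : exists i, U i (y m).
  by have [i _ Ui] := cov (y m) (or_intror (ex_intro _ m erefl)); exists i.
have [iy hiy'] := choice hiy.
exists ([set i0] `|` [set iy m | m in `I_m0]); split.
  by rewrite finite_setU; split; [exact: finite_set1|apply: finite_image; exact: finite_II].
move=> v [->|[m ->]]; first by exists i0 => //; left.
have [hm|hm] := leqP m0 m.
  by exists i0; [left|apply: sub; apply: iny].
by exists (iy m); [right; exists m|apply: hiy'].
Qed.

Lemma anti_atomless : anti_compact P PP -> atomless P S.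
Proof. by move=> hac [B [BS hB]]; apply: (atom_not_anti BS hB hac). Qed.

End Main.

Unset Implicit Arguments.

Theorem proposition5p2 (d : measure_display) (Omega : measurableType d)
  (R : realType) (P : probability Omega R)
  (E : zmodType) (smul : (Omega -> R) -> E -> E)
  (PP : set (E -> Omega -> R)) (S : set Omega) :
  stable_lc_module P smul PP ->
  is_support P smul S ->
  (0 < P S)%E ->
  (anti_compact P PP <-> atomless P S).
Proof.
move=> H1 H2 H3; split.
- exact: (anti_atomless H1 H2).
- exact: (atomless_anti H1 H2).
Qed.
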